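(* Let $X$ be a nonempty set and $f,g:X\to\mathbb{R}$. Then there exists $\lambda\in[0,1]$ such that \[ 0\leq \lambda f(x)+(1-\lambda)g(x)\qquad (x\in X) \] if and only if \[ 0\leq \max\big(t f(x)+(1-t)f(y),\ t g(x)+(1-t)g(y)\big)\qquad (x,y\in X,\ t\in[0,1]). \] *)

(* Defs.v *)
From Stdlib Require Export Reals.

(* Main.v *)
Require Import Defs.
From Stdlib Require Import Reals Lra Psatz.
Open Scope R_scope.

Lemma pair_lemma (a b c d : R) :
  0 <= a -> b < 0 -> c < 0 -> 0 <= d ->
  (forall t, 0 <= t <= 1 -> 0 <= Rmax (t * a + (1 - t) * c) (t * b + (1 - t) * d)) ->
  b / (b - a) <= d / (d - c).
Proof.
  intros Ha Hb Hc Hd H.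
  set (l := b / (b - a)). set (u := d / (d - c)).
  assert (El : l * (b - a) = b) by (unfold l; field; lra).
  assert (Eu : u * (d - c) = d) by (unfold u; field; lra).
  destruct (Rle_or_lt l u) as [|Hlt]; [assumption|exfalso].
  set (p := d / (d - b)). set (q := - c / (a - c)).
  assert (Ep : p * (d - b) = d) by (unfold p; field; lra).
  assert (Eq : q * (a - c) = - c) by (unfold q; field; lra).
  assert (Hneg : (b - a) * (d - c) < 0).
  { assert (0 < (a - b) * (d - c)) by (apply Rmult_lt_0_compat; lra). nra. }
  assert (Hm : l * ((b - a) * (d - c)) < u * ((b - a) * (d - c))).
  { assert (0 < (l - u) * (- ((b - a) * (d - c)))) by (apply Rmult_lt_0_compat; lra). nra. }
  assert (Hbc : a * d < b * c).
  { replace (l * ((b - a) * (d - c))) with (b * (d - c)) in Hm by (rewrite <- Rmult_assoc, El; ring).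
    replace (u * ((b - a) * (d - c))) with (d * (b - a)) in Hm by (rewrite (Rmult_comm (b - a)), <- Rmult_assoc, Eu; ring).
    lra. }
  assert (Hpq : p < q).
  { destruct (Rlt_or_le p q) as [|Hqp]; [assumption|exfalso].
    assert (HM : 0 < (d - b) * (a - c)) by (apply Rmult_lt_0_compat; lra).
    assert (q * ((d - b) * (a - c)) <= p * ((d - b) * (a - c))) by (apply Rmult_le_compat_r; lra).
    replace (p * ((d - b) * (a - c))) with (d * (a - c)) in H0 by (rewrite <- Rmult_assoc, Ep; ring).
    replace (q * ((d - b) * (a - c))) with (- c * (d - b)) in H0 by (rewrite (Rmult_comm (d - b)), <- Rmult_assoc, Eq; ring).
    lra. }
  assert (Hp0 : 0 <= p) by nra.
  assert (Hq1 : q <= 1) by nra.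
  set (t := (p + q) / 2).
  specialize (H t ltac:(unfold t; lra)).
  assert (H1 : t * a + (1 - t) * c < 0) by (unfold t; nra).
  assert (H2 : t * b + (1 - t) * d < 0) by (unfold t; nra).
  pose proof (Rmax_lub_lt _ _ _ H1 H2). lra.
Qed.

Theorem corollary2p3 (X : Type) (HX : inhabited X) (f g : X -> R) :
  (exists lam : R, 0 <= lam <= 1 /\
     forall x : X, 0 <= lam * f x + (1 - lam) * g x)
  <->
  (forall (x y : X) (t : R), 0 <= t <= 1 ->
     0 <= Rmax (t * f x + (1 - t) * f y) (t * g x + (1 - t) * g y)).
Proof.
  split.
  - intros [lam [Hl H]] x y t Ht.
    destruct (Rle_or_lt 0 (Rmax (t * f x + (1 - t) * f y) (t * g x + (1 - t) * g y))) as [|Hm]; [assumption|exfalso].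
    pose proof (Rmax_l (t * f x + (1 - t) * f y) (t * g x + (1 - t) * g y)).
    pose proof (Rmax_r (t * f x + (1 - t) * f y) (t * g x + (1 - t) * g y)).
    pose proof (H x). pose proof (H y).
    assert (0 <= lam * (t * f x + (1 - t) * f y) + (1 - lam) * (t * g x + (1 - t) * g y)) by nra.
    nra.
  - intros H.
    assert (Hself : forall x, 0 <= f x \/ 0 <= g x).
    { intro x. specialize (H x x 1 ltac:(lra)).
      replace (1 * f x + (1 - 1) * f x) with (f x) in H by ring.
      replace (1 * g x + (1 - 1) * g x) with (g x) in H by ring.
      destruct (Rle_or_lt 0 (f x)); [now left|].
      destruct (Rle_or_lt 0 (g x)); [now right|].
      pose proof (Rmax_lub_lt _ _ _ H0 H1). lra. }
    set (E := fun lam => lam = 0 \/ exists x, g x < 0 <= f x /\ lam = g x / (g x - f x)).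
    assert (HEb : forall lam, E lam -> 0 <= lam <= 1).
    { intros lam [->|[x [[H1 H2] ->]]]; [lra|].
      set (l := g x / (g x - f x)).
      assert (El : l * (g x - f x) = g x) by (unfold l; field; lra).
      split; nra. }
    assert (Hbound : bound E) by (exists 1; intros y Hy; apply HEb in Hy; lra).
    destruct (completeness E Hbound (ex_intro _ 0 (or_introl eq_refl))) as [s [Hub Hlub]].
    assert (Hs0 : 0 <= s) by (apply Hub; now left).
    assert (Hs1 : s <= 1) by (apply Hlub; intros y Hy; apply HEb in Hy; lra).
    exists s. split; [lra|]. intro x.
    destruct (Rle_or_lt 0 (f x)) as [Hf|Hf]; destruct (Rle_or_lt 0 (g x)) as [Hg|Hg].
    + nra.
    + set (l := g x / (g x - f x)).
      assert (El : l * (g x - f x) = g x) by (unfold l; field; lra).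
      assert (l <= s) by (apply Hub; right; exists x; split; [lra|reflexivity]).
      nra.
    + set (u := g x / (g x - f x)).
      assert (Eu : u * (g x - f x) = g x) by (unfold u; field; lra).
      assert (Hu0 : 0 <= u) by nra.
      assert (s <= u).
      { apply Hlub. intros y [->|[z [[H1 H2] ->]]]; [lra|].
        apply pair_lemma; try lra.
        intros t Ht. exact (H z x t Ht). }
      nra.
    + destruct (Hself x); lra.
Qed.
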